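(* Assume $d\ge3$. For every $a\in\mathcal K_d$, $$\bigl(B(a)-d\bigr)\bigl(d+2\sqrt{d-1}\bigr)\le A(a)B(a)-d^2,$$ where the right side lies in $[0,\infty]$ (it is $+\infty$, and the inequality strict, if some $a_i=0$). Equality holds if and only if $a=\mathbf 1$ or $a$ is a coordinate permutation of $$a_\star:=\Big(\frac{d\sqrt{d-1}}{\sqrt{d-1}+d-1},\frac{d}{\sqrt{d-1}+d-1},\dots,\frac{d}{\sqrt{d-1}+d-1}\Big).$$
   Context: $\mathcal K_d:=\{a\in\mathbb R_+^d:\sum_{i=1}^d a_i=d\}$. For $a\in\mathcal K_d$, $A(a):=\sum_{i=1}^d 1/a_i\in[d,\infty]$ (with $A(a)=\infty$ if some $a_i=0$) and $B(a):=\sum_{i=1}^d a_i^2$. *)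

(* Defs.v *)
From HB Require Import structures.
From mathcomp Require Import all_boot all_order all_algebra.
From mathcomp Require Import perm.
From mathcomp Require Import constructive_ereal.
Set Implicit Arguments. Unset Strict Implicit. Unset Printing Implicit Defensive.
Import Order.TTheory GRing.Theory Num.Theory.
Local Open Scope ring_scope.

Section Defs.
Variable R : realFieldType.

Definition inK (d : nat) (a : 'I_d -> R) : Prop :=
  (forall i, 0 <= a i) /\ \sum_(i < d) a i = d%:R.

Definition Aext (d : nat) (a : 'I_d -> R) : \bar R :=
  if [forall i, a i != 0] then (\sum_(i < d) (a i)^-1)%:E else +oo%E.

Definition Bf (d : nat) (a : 'I_d -> R) : R := \sum_(i < d) a i ^+ 2.

End Defs.

Section Astar.
Variable R : rcfType.
Definition astar (d : nat) (i : 'I_d) : R :=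
  let s := Num.sqrt (d%:R - 1) in
  if val i == 0%N then d%:R * s / (s + d%:R - 1) else d%:R / (s + d%:R - 1).
End Astar.

(* Main.v *)
Require Import Defs.
From HB Require Import structures.
From mathcomp Require Import all_boot all_order all_algebra.
From mathcomp Require Import perm.
From mathcomp Require Import constructive_ereal.
From mathcomp Require Import ring lra.
Import Order.TTheory GRing.Theory Num.Theory.
Local Open Scope ring_scope.


Lemma alg_id (R : fieldType) (s p w S Q Sr1 : R) : s != 0 -> 1 + p != 0 -> s^+2 - p != 0 ->
  Q = w + s^+2 * ((s^+2-p)/s^+2)^+2 ->
  Sr1 = S + (((s^+2-p)/s^+2)^+2 * (1+p))^-1 * (Q - (2 * ((s^+2-p)/s^+2)+(1+p)) * (s^+2 - p)
           + (((s^+2-p)/s^+2)^+2+2 * ((s^+2-p)/s^+2) * (1+p)) * s^+2) ->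
  ((1+p)^-1 + Sr1) * ((1+p)^+2+Q) - (s^+2+1+2 * s) * ((1+p)^+2+Q) + 2 * s * (s^+2+1)
  = p^+2 * (s^+2+1) * ((s+1) * p-s * (s-1))^+2 / (s^+2 * (1+p) * (s^+2-p))
    + w * (s^+2 * ((s+1) * p-s * (s-1))^+2 + 2 * s * p * (s^+2-p) + (s+1)^+2 * p^+2 * (s^+2-p)) / ((s^+2-p)^+2 * (1+p))
    + w^+2 * s^+4/((s^+2-p)^+2 * (1+p)) + S * ((1+p)^+2+Q).
Proof.
move=> hs hp hsp -> ->. field.
by rewrite hs hp hsp.
Qed.

Lemma sum_lin (R : ringType) (I : finType) (P : pred I) (f g : I -> R) (c2 c1 c0 : R) :
 \sum_(i | P i) (g i + c2 * f i ^+ 2 + c1 * f i + c0) =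
 \sum_(i | P i) g i + c2 * \sum_(i | P i) f i ^+ 2 + c1 * \sum_(i | P i) f i + c0 * \sum_(i | P i) 1.
Proof.
rewrite !big_split /= !mulr_sumr; congr (_ + _ + _ + _); apply: eq_bigr => i _; by rewrite mulr1.
Qed.

Lemma ex_max (R : realDomainType) n (f : 'I_n -> R) (i0 : 'I_n) : exists k, forall i, f i <= f k.
Proof. case: (@arg_maxP _ R _ i0 xpredT f isT) => k _ H. by exists k => i; apply: H. Qed.

Lemma sum_one (R : ringType) d : \sum_(i < d) (1:R) = d%:R.
Proof. by rewrite sumr_const card_ord. Qed.


Lemma decomp (R : rcfType) d (a : 'I_d -> R) (s : R) (k j : 'I_d) :
  j != k -> (forall i, 0 < a i) -> \sum_i a i = s^+2 + 1 -> d%:R = s^+2 + 1 :> R -> 0 < s ->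
  let p := a k - 1 in let u := (s^+2 - p)/s^+2 in
  let w := \sum_(i | i != k) (a i - u)^+2 in
  let S := \sum_(i | i != k) ((u^+2 * (1+p))^-1 * (a i - u)^+2 * (1 + p - a i) / a i) in
  let Q := \sum_(i | i != k) a i ^+ 2 in
  0 < s^+2 - p /\
  (\sum_i (a i)^-1) * (\sum_i a i ^+2) - (s^+2 + 1 + 2 * s) * (\sum_i a i ^+2) + 2 * s * (s^+2+1)
  = p^+2 * (s^+2+1) * ((s+1) * p-s * (s-1))^+2 / (s^+2 * (1+p) * (s^+2-p))
    + w * (s^+2 * ((s+1) * p-s * (s-1))^+2 + 2 * s * p * (s^+2-p) + (s+1)^+2 * p^+2 * (s^+2-p)) / ((s^+2-p)^+2 * (1+p))
    + w^+2 * s^+4/((s^+2-p)^+2 * (1+p)) + S * ((1+p)^+2+Q).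
Proof.
move=> hjk hpos hsum hd hs p u w S Q.
have hk : a k = 1 + p by rewrite /p; ring.
have hSr : \sum_(i | i != k) a i = s^+2 - p.
  move: hsum; rewrite (bigD1 k) //= hk => h; lra.
have hN : \sum_(i | i != k) (1:R) = s^+2.
  have := sum_one R d; rewrite (bigD1 k) //= hd => h; lra.
have hSrpos : 0 < s^+2 - p.
  rewrite -hSr (bigD1 j) //=; apply: ltr_pwDl => //; apply: sumr_ge0 => i _; exact: ltW.
split => //.
have hs0 : s != 0 by rewrite gt_eqF.
have hp0 : 1 + p != 0 by rewrite -hk gt_eqF.
have hsp0 : s^+2 - p != 0 by rewrite gt_eqF.
rewrite (bigD1 k) //= [X in _ * X](bigD1 k) //= [X in _ - _ * X](bigD1 k) //= hk.
have hw : w = Q - 2 * u * (s^+2 - p) + u^+2 * s^+2.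
  rewrite /w (eq_bigr (fun i => 0 + 1 * a i ^+ 2 + (-(2 * u)) * a i + u^+2)); last by move=> i _; ring.
  by rewrite sum_lin big1 // hSr hN mul1r add0r -/Q; ring.
have hS : S = \sum_(i | i != k) (a i)^-1 + (-(u^+2 * (1+p))^-1) * Q
      + ((u^+2 * (1+p))^-1 * (2 * u + (1+p))) * (s^+2 - p) + (-((u^+2 * (1+p))^-1 * (u^+2 + 2 * u * (1+p)))) * s^+2.
  rewrite /S (eq_bigr (fun i => (a i)^-1 + (-(u^+2 * (1+p))^-1) * a i ^+ 2
      + ((u^+2 * (1+p))^-1 * (2 * u + (1+p))) * a i + (-((u^+2 * (1+p))^-1 * (u^+2 + 2 * u * (1+p)))))); last first.
    move=> i _; have hai : a i != 0 by rewrite gt_eqF.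
    rewrite /u; field; by rewrite hai hs0 hsp0 hp0.
  by rewrite sum_lin hSr hN -/Q.
apply: alg_id => //.
- rewrite -/Q -/w hw /u. field. by rewrite hs0.
- rewrite -/Q -/S hS /u. field. by rewrite hs0 hsp0 hp0.
Qed.


Lemma other_idx d (k : 'I_d) : (2 <= d)%N -> exists j : 'I_d, j != k.
Proof.
move=> hd.
have h0 : (0 < d)%N by apply: leq_trans hd.
have h1 : (1 < d)%N by [].
case: (eqVneq k (Ordinal h0)) => [->|hk].
  by exists (Ordinal h1); apply/eqP => /(congr1 val).
by exists (Ordinal h0); rewrite eq_sym.
Qed.

Lemma rhs_zero (R : fieldType) (s p Q : R) :
  (p = 0 \/ (s+1) * p - s * (s-1) = 0) ->
  p^+2 * (s^+2+1) * ((s+1) * p-s * (s-1))^+2 / (s^+2 * (1+p) * (s^+2-p))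
    + 0 * (s^+2 * ((s+1) * p-s * (s-1))^+2 + 2 * s * p * (s^+2-p) + (s+1)^+2 * p^+2 * (s^+2-p)) / ((s^+2-p)^+2 * (1+p))
    + 0^+2 * s^+4/((s^+2-p)^+2 * (1+p)) + 0 * ((1+p)^+2+Q) = 0.
Proof.
case=> ->; by rewrite !(expr0n, mul0r, mulr0, add0r, addr0).
Qed.

Lemma terms_ge0 (R : realFieldType) (s p w S Q : R) :
  0 < s -> 0 <= p -> 0 < s^+2 - p -> 0 <= w -> 0 <= S -> 0 <= Q ->
  [/\ 0 <= p^+2 * (s^+2+1) * ((s+1) * p-s * (s-1))^+2 / (s^+2 * (1+p) * (s^+2-p)),
    0 <= w * (s^+2 * ((s+1) * p-s * (s-1))^+2 + 2 * s * p * (s^+2-p) + (s+1)^+2 * p^+2 * (s^+2-p)) / ((s^+2-p)^+2 * (1+p)),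
    0 <= w^+2 * s^+4/((s^+2-p)^+2 * (1+p)) & 0 <= S * ((1+p)^+2+Q)].
Proof.
move=> hs hp hsp hw hS hQ.
have hp1 : 0 <= 1 + p by lra.
have hsp' : 0 <= s^+2 - p by lra.
have hs' : 0 <= s by lra.
split.
- have h1 : 0 <= s^+2 + 1 by rewrite addr_ge0 // ?sqr_ge0.
  apply: divr_ge0; last by rewrite !mulr_ge0 // ?sqr_ge0.
  by apply: mulr_ge0; [apply: mulr_ge0 => //; apply: sqr_ge0 | apply: sqr_ge0].
- apply: divr_ge0; last by rewrite mulr_ge0 // ?sqr_ge0.
  apply: mulr_ge0 => //; apply: addr_ge0; first apply: addr_ge0.
  + by rewrite mulr_ge0 // ?sqr_ge0.
  + by rewrite !mulr_ge0.
  + by apply: mulr_ge0 => //; apply: mulr_ge0; apply: sqr_ge0.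
- by rewrite divr_ge0 // ?mulr_ge0 // ?exprn_ge0 // ?sqr_ge0.
- by rewrite mulr_ge0 // addr_ge0 // ?sqr_ge0.
Qed.


Lemma core (R : rcfType) d (a : 'I_d -> R) (s : R) :
  (3 <= d)%N -> (forall i, 0 < a i) -> \sum_i a i = s^+2 + 1 -> d%:R = s^+2 + 1 :> R -> 0 < s ->
  let F := (\sum_i (a i)^-1) * (\sum_i a i ^+2) - (s^+2 + 1 + 2 * s) * (\sum_i a i ^+2) + 2 * s * (s^+2+1) in
  0 <= F /\ (F = 0 <-> (forall i, a i = 1) \/
     exists k, a k = (s^+2+1) * s / (s + (s^+2+1) - 1) /\
               forall i, i != k -> a i = (s^+2+1) / (s + (s^+2+1) - 1)).
Proof.
move=> hd hpos hsum hD hs F.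
have hd2 : (2 <= d)%N by apply: leq_trans hd.
have h0 : (0 < d)%N by apply: leq_trans hd.
have hs0 : s != 0 by rewrite gt_eqF.
have hs1 : s + 1 != 0 by rewrite gt_eqF // ltr_wpDr.
have hden : s + (s^+2+1) - 1 != 0.
  by rewrite gt_eqF // (_ : s + (s^+2+1) - 1 = s * (s + 1)); [rewrite mulr_gt0 // ltr_wpDr | ring].
have [k hmax] := @ex_max R d a (Ordinal h0).
have [j hjk] := @other_idx d k hd2.
have [hsp hF] := @decomp R d a s k j hjk hpos hsum hD hs.
set p := a k - 1 in hsp hF.
set u := (s^+2 - p) / s^+2 in hF.
set w := \sum_(i | i != k) (a i - u)^+2 in hF.
set S := \sum_(i | i != k) _ in hF.
set Q := \sum_(i | i != k) a i ^+ 2 in hF.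
have hk : a k = 1 + p by rewrite /p; ring.
have hp : 0 <= p.
  have : \sum_(i < d) a i <= \sum_(i < d) a k by apply: ler_sum => i _; exact: hmax.
  rewrite hsum sumr_const card_ord -mulr_natr hD => h.
  have hs2 : 0 < s^+2 + 1 by rewrite ltr_wpDl ?sqr_ge0.
  rewrite /p subr_ge0. by rewrite -(ler_pM2r hs2) mul1r.
have hu : 0 < u by rewrite divr_gt0 // exprn_gt0.
have hw : 0 <= w by apply: sumr_ge0 => i _; exact: sqr_ge0.
have hS : 0 <= S.
  apply: sumr_ge0 => i _; apply: divr_ge0; last exact: ltW.
  apply: mulr_ge0; last by rewrite -hk subr_ge0.
  apply: mulr_ge0; last exact: sqr_ge0.
  by rewrite invr_ge0 mulr_ge0 // ?sqr_ge0 //; lra.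
have hQ : 0 <= Q by apply: sumr_ge0 => i _; exact: sqr_ge0.
have [t1 t2 t3 t4] := @terms_ge0 R s p w S Q hs hp hsp hw hS hQ.
split; first by rewrite /F hF !addr_ge0.
have hs4 : s^+4 != 0 by rewrite expf_neq0.
have hp1 : 1 + p != 0 by rewrite gt_eqF //; lra.
have hsp0 : s^+2 - p != 0 by rewrite gt_eqF.
have hs21 : s^+2 + 1 != 0 by rewrite gt_eqF // ltr_wpDl ?sqr_ge0.
split.
- rewrite /F hF => h0F.
  have e3 : w^+2 * s^+4/((s^+2-p)^+2 * (1+p)) = 0 by lra.
  have e1 : p^+2 * (s^+2+1) * ((s+1) * p-s * (s-1))^+2 / (s^+2 * (1+p) * (s^+2-p)) = 0 by lra.
  have w0 : w = 0.
    have e : w^+2 = (w^+2 * s^+4/((s^+2-p)^+2 * (1+p))) * ((s^+2-p)^+2 * (1+p)) / s^+4.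
      by field; rewrite hs0 hsp0 hp1.
    by move: e; rewrite e3 !mul0r => /eqP; rewrite sqrf_eq0 => /eqP.
  have e1' : p^+2 * (s^+2+1) * ((s+1) * p-s * (s-1))^+2 = 0.
    have e : p^+2 * (s^+2+1) * ((s+1) * p-s * (s-1))^+2 =
      (p^+2 * (s^+2+1) * ((s+1) * p-s * (s-1))^+2 / (s^+2 * (1+p) * (s^+2-p))) * (s^+2 * (1+p) * (s^+2-p)).
      by field; rewrite hs0 hsp0 hp1.
    by rewrite e e1 mul0r.
  have hai : forall i, i != k -> a i = u.
    move=> i hi; have := psumr_eq0P (fun i _ => sqr_ge0 (a i - u)) w0 hi.
    by move/eqP; rewrite sqrf_eq0 subr_eq0 => /eqP.
  move/eqP: e1'; rewrite !mulf_eq0 (negbTE hs21) orbF !orbb => /orP [/eqP p0 | /eqP sq0].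
    left => i; case: (eqVneq i k) => [->|hik]; first by rewrite hk p0 addr0.
    by rewrite hai // /u p0 subr0 divff // expf_neq0.
  right; exists k.
  have ep : p = s * (s-1) / (s+1).
    rewrite -[LHS](mulKf hs1) mulrC; congr (_ * _); lra.
  split; first by rewrite hk ep; field; rewrite hs1 hden.
  by move=> i hi; rewrite hai // /u ep; field; rewrite hs0 hs1 hden.
- case=> [h1 | [k' [hk1 hk2]]].
  + rewrite /F hF.
    have p0 : p = 0 by rewrite /p h1 subrr.
    have u1 : u = 1 by rewrite /u p0 subr0 divff // expf_neq0.
    have w0 : w = 0 by apply: big1 => i _; rewrite h1 u1 subrr expr0n.
    have S0 : S = 0 by apply: big1 => i _; rewrite h1 u1 subrr expr0n /= !(mulr0, mul0r).
    by rewrite w0 S0; apply: rhs_zero; left.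
  + have [j' hj'] := @other_idx d k' hd2.
    have [_ hF'] := @decomp R d a s k' j' hj' hpos hsum hD hs.
    rewrite /F hF'.
    have hu' : (s^+2 - (a k' - 1)) / s^+2 = (s^+2+1) / (s + (s^+2+1) - 1).
      by rewrite hk1; field; rewrite hs0 hden.
    rewrite hu'.
    rewrite big1; last by move=> i hi; rewrite (hk2 i hi) subrr expr0n.
    rewrite big1; last by move=> i hi; rewrite (hk2 i hi) subrr expr0n /= !(mulr0, mul0r).
    apply: rhs_zero; right; rewrite hk1; field; by rewrite hden.
Qed.


Theorem lemma7p2 (R : rcfType) (d : nat) (hd : (3 <= d)%N) (a : 'I_d -> R)
  (ha : inK a) :
  (((Bf a - d%:R) * (d%:R + 2 * Num.sqrt (d%:R - 1)))%:E
      <= Aext a * (Bf a)%:E - (d%:R ^+ 2)%:E)%E /\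
  (((Bf a - d%:R) * (d%:R + 2 * Num.sqrt (d%:R - 1)))%:E
      = (Aext a * (Bf a)%:E - (d%:R ^+ 2)%:E)%E
   <-> ((forall i, a i = 1) \/
        exists s : 'S_d, forall i, a i = @astar R d (s i))).
Proof.
case: ha => hnn hsum.
have h0 : (0 < d)%N by apply: leq_trans hd.
have hd1 : 0 < d%:R - 1 :> R by rewrite subr_gt0 ltr1n; apply: leq_trans hd.
set s := Num.sqrt (d%:R - 1).
have hs2 : s^+2 = d%:R - 1 by rewrite sqr_sqrtr // ltW.
have hs : 0 < s by rewrite sqrtr_gt0.
have hD : d%:R = s^+2 + 1 :> R by rewrite hs2; ring.
have hden : 0 < s + (s^+2+1) - 1.
  by rewrite (_ : s + (s^+2+1) - 1 = s * (s + 1)); [rewrite mulr_gt0 // ltr_wpDr | ring].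
have hastar : forall i, 0 < @astar R d i.
  move=> i; rewrite /astar /= -/s hD.
  by case: ifP => _; rewrite divr_gt0 // ?mulr_gt0 // ltr_wpDl ?sqr_ge0.
have hB : 0 < Bf a.
  rewrite lt0r sumr_ge0 ?andbT; last by move=> i _; exact: sqr_ge0.
  apply/negP => /eqP hB0.
  have := psumr_eq0P (fun i _ => sqr_ge0 (a i)) hB0.
  move=> hz; move: hsum; rewrite big1; last first.
    by move=> i _; apply/eqP; rewrite -sqrf_eq0; apply/eqP; apply: hz.
  move=> h; move: hd1; rewrite -h; lra.
rewrite /Aext; case: ifP => hall; last first.
  rewrite gt0_mulye ?lte_fin // addye //; split; first exact: leey.
  split; first by [].
  move=> h; exfalso; move/negbT/negP: hall; apply; apply/forallP => i.
  case: h => [h1 | [sg hsg]]; first by rewrite h1 oner_neq0.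
  by rewrite hsg gt_eqF.
have hpos : forall i, 0 < a i.
  by move=> i; rewrite lt0r hnn andbT; move/forallP: hall; apply.
have hsum' : \sum_i a i = s^+2 + 1 by rewrite hsum hD.
have [hF0 hFeq] := @core R d a s hd hpos hsum' hD hs.
rewrite -EFinM -EFinB lee_fin /Bf hD.
move: hF0 hFeq.
set A := \sum_i (a i)^-1; set B := \sum_i a i ^+ 2 => hF0 hFeq.
split.
  rewrite -subr_ge0.
  have -> : A * B - (s ^+ 2 + 1) ^+ 2 - (B - (s ^+ 2 + 1)) * (s ^+ 2 + 1 + 2 * s)
    = A * B - (s^+2 + 1 + 2 * s) * B + 2 * s * (s^+2+1) by ring.
  exact: hF0.
have -> : (((B - (s ^+ 2 + 1)) * (s ^+ 2 + 1 + 2 * s))%:E = (A * B - (s ^+ 2 + 1) ^+ 2)%:E)%E <->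
   (A * B - (s^+2 + 1 + 2 * s) * B + 2 * s * (s^+2+1) = 0).
  split.
    move=> h0E; have h := EFin_inj h0E.
    transitivity ((A * B - (s ^+ 2 + 1) ^+ 2) - (B - (s ^+ 2 + 1)) * (s ^+ 2 + 1 + 2 * s)); first by ring.
    by rewrite h subrr.
  move=> h; congr (_%:E).
  transitivity ((A * B - (s ^+ 2 + 1) ^+ 2) - (A * B - (s^+2 + 1 + 2 * s) * B + 2 * s * (s^+2+1))); first by ring.
  by rewrite h subr0.
rewrite hFeq; apply: or_iff_compat_l.
have z0 : val (Ordinal h0) = 0%N by [].
split.
- case=> k [hk hi]; exists (tperm k (Ordinal h0)) => i.
  rewrite /astar /= -/s hD.
  case: (eqVneq i k) => [->|hik]; first by rewrite tpermL.
  have hne : tperm k (Ordinal h0) i != Ordinal h0.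
    by rewrite -{2}(tpermL k (Ordinal h0)) (inj_eq perm_inj).
  have -> : (val (tperm k (Ordinal h0) i) == 0%N) = false.
    apply/negbTE; apply: contra hne => /eqP h; apply/eqP; apply: val_inj; by rewrite h.
  exact: hi.
- case=> sg hsg; exists (sg^-1 (Ordinal h0))%g; split.
    by rewrite hsg permKV /astar /= -/s hD.
  move=> i hi; rewrite hsg /astar /= -/s hD.
  have -> : (val (sg i) == 0%N) = false.
    apply/negbTE; apply: contra hi => /eqP h.
    have e : sg i = Ordinal h0 by apply: val_inj; rewrite h.
    by rewrite -e permK.
  by [].
Qed.
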